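(* Let $p>1$ and $q>1$. Let $X$ be an $\mathbb{R}$-smooth Banach space, $Y$ a Banach space, $\mathcal{D}(A)\subset\mathcal{D}(B)\subset X$ subspaces, and $A:\mathcal{D}(A)\to X$, $B:\mathcal{D}(B)\to Y$ (possibly nonlinear) operators. Let $y\in\mathcal{D}(A)$ satisfy $A(y)=0$ and $B(y)=0$. Let $y_\theta\in\mathcal{D}(A)$ and set $\mathcal{R}_{eq}=A(y_\theta)$, $\mathcal{R}_{bn}=B(y_\theta)$, $\mathcal{E}=\|y_\theta-y\|^q$. Assume $A$ is $(p,\psi)$-coercive with function $\Lambda$, and $\psi$ is subordinate to $B$ (on $\mathcal{D}(A)$) with functions $\gamma$ and $\rho$. Then $$\mathcal{E}\le p^{\frac qp}\left(\gamma(y_\theta,y)\rho(\mathcal{R}_{bn})+\frac1p\Lambda^p(y_\theta,y)\|\mathcal{R}_{eq}\|^p\right)^{\frac qp}.$$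
   Context: $X$ is $\mathbb{R}$-smooth if for all $y$ with $\|y\|=1$ and all $\chi\in X$ the limit $D(\|\cdot\|)(y;\chi)=\lim_{\mathbb{R}\ni s\to0}\frac{\|y+s\chi\|-\|y\|}{s}$ exists (hence it exists for every $y\ne0$). Real $p$-form: $\langle y_1,y_2\rangle_p:=\|y_2\|^{p-1}D(\|\cdot\|)(y_2;y_1)$ for $y_2\neq0$, $\langle y_1,0\rangle_p:=0$ (equivalently $\|y_2\|^{p-2}\mathrm{Re}[y_1,y_2]$ with the semi-inner product $[\chi,y]=\|y\|(D(\|\cdot\|)(y;\chi)-iD(\|\cdot\|)(y;i\chi))$). $A$ is $(p,\psi)$-coercive, for $\psi:\mathcal{D}(A)\times\mathcal{D}(A)\to\mathbb{R}$, if $\|\chi-y\|^p\le\psi(\chi,y)+\Lambda(\chi,y)\langle A(\chi)-A(y),\chi-y\rangle_p$ for all $\chi,y\in\mathcal{D}(A)$, with some $\Lambda(\chi,y)\ge0$. $\psi$ is subordinate to $B$ if there is $\rho\in C(Y;\mathbb{R}^+)$ with $\rho(\xi)\to0$ as $\xi\to0$ and $|\psi(\chi,y)|\le\gamma(\chi,y)\rho(B(\chi)-B(y))$ for all $\chi,y\in\mathcal{D}(A)$, with some $\gamma(\chi,y)\ge0$. *)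

(* Defs.v *)
From HB Require Import structures.
From mathcomp Require Import all_boot all_order all_algebra.
From mathcomp Require Import all_classical all_reals all_analysis.
Set Implicit Arguments. Unset Strict Implicit. Unset Printing Implicit Defensive.
Import Order.TTheory GRing.Theory Num.Theory.
Import numFieldNormedType.Exports.
Local Open Scope classical_set_scope.
Local Open Scope ring_scope.

Section Defs.
Context {R : realType} {X : normedModType R}.

Definition norm_dq (y chi : X) (s : R) : R := (`|y + s *: chi| - `|y|) / s.

Definition R_smooth : Prop :=
  forall y : X, `|y| = 1 -> forall chi : X,
    exists l : R, norm_dq y chi s @[s --> 0^'] --> l.

Definition Dnorm (y chi : X) : R := lim (norm_dq y chi s @[s --> 0^']).

Definition pform (p : R) (y1 y2 : X) : R :=
  if y2 == 0 then 0 else `|y2| `^ (p - 1) * Dnorm y2 y1.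

Definition is_subspace (S : set X) : Prop :=
  S 0 /\ forall (a : R) (x z : X), S x -> S z -> S (a *: x + z).

Definition coercive (p : R) (DA : set X) (A : X -> X) (psi Lambda : X -> X -> R)
  : Prop :=
  (forall x z, 0 <= Lambda x z) /\
  forall x z, DA x -> DA z ->
    `|x - z| `^ p <= psi x z + Lambda x z * pform p (A x - A z) (x - z).
End Defs.

Definition subordinate {R : realType} {X Y : normedModType R}
  (DA : set X) (B : X -> Y) (psi gamma : X -> X -> R) (rho : Y -> R) : Prop :=
  continuous rho /\ (forall xi, 0 <= rho xi) /\
  (rho xi @[xi --> (0 : Y)] --> (0 : R)) /\
  (forall x z, 0 <= gamma x z) /\
  forall x z, DA x -> DA z -> `|psi x z| <= gamma x z * rho (B x - B z).

(* Main.v *)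
Require Import Defs.
From HB Require Import structures.
From mathcomp Require Import all_boot all_order all_algebra.
From mathcomp Require Import all_classical all_reals all_analysis.
From mathcomp Require Import ring lra.
Import Order.TTheory GRing.Theory Num.Theory.
Import numFieldNormedType.Exports.
Local Open Scope classical_set_scope.
Local Open Scope ring_scope.

Lemma scale_dnbhs (R : realType) (c : R) : 0 < c ->
  (fun s => s / c) @ (0:R)^' --> (0:R)^'.
Proof.
move=> c0 P /=.
rewrite /nbhs /= /dnbhs /within /=. 
move=> /nbhs_ballP [e e0 HP].
apply/nbhs_ballP; exists (e * c); first by apply: mulr_gt0.
move=> s /= Hs sn0; apply: HP.
  move: Hs; rewrite /ball /= !sub0r !normrN => Hs.
  rewrite normrM (gtr0_norm (x := c^-1)) ?invr_gt0 // ltr_pdivrMr //.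
by rewrite mulf_neq0 // invr_eq0 gt_eqF.
Qed.

Lemma norm_dq_le (R : realType) (X : normedModType R) (d a : X) (s : R) :
  norm_dq d a s <= `|a|.
Proof.
rewrite /norm_dq; have [->|s0] := eqVneq s 0; first by rewrite invr0 mulr0.
apply: le_trans (ler_norm _) _.
rewrite normrM normfV ler_pdivrMr ?normr_gt0 // mulrC.
apply: le_trans (ler_dist_dist _ _) _.
by rewrite (addrC d) addrK normrZ.
Qed.

Lemma Dnorm_le (R : realType) (X : normedModType R) (d a : X) :
  @R_smooth R X -> d != 0 -> Dnorm d a <= `|a|.
Proof.
move=> Hs d0.
have c0 : 0 < `|d| by rewrite normr_gt0.
set c := `|d| in c0.
set u := c^-1 *: d.
have Hu : `|u| = 1 by rewrite /u normrZ ger0_norm ?invr_ge0 ?ltW // mulVf ?gt_eqF.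
have [l Hl] := Hs u Hu a.
have du : d = c *: u by rewrite /u scalerA mulfV ?gt_eqF // scale1r.
have Heq : norm_dq d a = (norm_dq u a) \o (fun s => s / c).
  apply: funext => s /=; rewrite /norm_dq Hu.
  have [->|s0] := eqVneq s 0; first by rewrite !mul0r invr0 !mulr0.
  rewrite {1 2}du -[s *: a](@scalerKV _ _ c) ?gt_eqF // -scalerDr normrZ.
  rewrite normrZ Hu (gtr0_norm c0) mulr1.
  rewrite scalerA (mulrC _ s).
  set N := `|_|; by field; rewrite s0 gt_eqF.
have cv : norm_dq d a s @[s --> 0^'] --> l.
  rewrite Heq => P /Hl; exact: (@scale_dnbhs _ c c0).
rewrite /Dnorm; apply: limr_le; first by apply/cvg_ex; exists l.
by near=> s; apply: norm_dq_le.
Unshelve. all: by end_near.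
Qed.

Theorem theorem5 (R : realType) (X Y : completeNormedModType R) (p q : R)
  (DA DB : set X) (A : X -> X) (B : X -> Y)
  (psi Lambda gamma : X -> X -> R) (rho : Y -> R) (y ytheta : X) :
  1 < p -> 1 < q -> @R_smooth R X ->
  is_subspace DA -> is_subspace DB -> DA `<=` DB ->
  DA y -> A y = 0 -> B y = 0 -> DA ytheta ->
  coercive p DA A psi Lambda ->
  subordinate DA B psi gamma rho ->
  `|ytheta - y| `^ q <=
    p `^ (q / p) *
    (gamma ytheta y * rho (B ytheta)
     + p^-1 * (Lambda ytheta y) `^ p * `|A ytheta| `^ p) `^ (q / p).
Proof.
move=> p1 q1 Hs _ _ _ DAy Ay0 By0 DAt [LamGe0 Hco] [_ [rhoge0 [_ [gamge0 Hsub]]]].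
have p0 : 0 < p by apply: lt_trans p1.
have pn0 : p != 0 by rewrite gt_eqF.
have p10 : 0 < p - 1 by rewrite subr_gt0.
have p1n0 : p - 1 != 0 by rewrite gt_eqF.
have H1 := Hco _ _ DAt DAy; rewrite Ay0 subr0 in H1.
have Hpsi : psi ytheta y <= gamma ytheta y * rho (B ytheta).
  apply: le_trans (ler_norm _) _.
  by have := Hsub _ _ DAt DAy; rewrite By0 subr0.
set e := `|ytheta - y| in H1 *.
set L := Lambda ytheta y in H1 *.
set a := `|A ytheta|.
set G := gamma ytheta y * rho (B ytheta) in Hpsi *.
have L0 : 0 <= L by apply: LamGe0.
have Hpf : L * pform p (A ytheta) (ytheta - y) <= (L * a) * e `^ (p - 1).
  rewrite /pform; case: eqP => [_|/eqP dn0].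
    by rewrite mulr0; apply: mulr_ge0; [apply: mulr_ge0 => //; exact: normr_ge0|apply: powR_ge0].
  rewrite -/e -mulrA; apply: ler_wpM2l => //.
  rewrite mulrC; apply: ler_wpM2r; first exact: powR_ge0.
  exact: Dnorm_le.
have Yg := @conjugate_powR R (L * a) (e `^ (p - 1)) p (p / (p - 1))
  (mulr_ge0 L0 (normr_ge0 _)) (powR_ge0 _ _) p0
  (divr_gt0 p0 p10).
rewrite -powRrM (_ : (p - 1) * (p / (p - 1)) = p) in Yg; last by field.
have Yg' := Yg (ltac:(field; by rewrite pn0 p1n0)).
rewrite powRM // in Yg'; last exact: normr_ge0.
set E := e `^ p in H1 Yg' *.
set K := L `^ p * a `^ p in Yg' *.
have E0 : 0 <= E by apply: powR_ge0.
have K0 : 0 <= K by rewrite mulr_ge0 ?powR_ge0.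
have HE : E <= p * (G + p^-1 * L `^ p * a `^ p).
  rewrite -mulrA -/K.
  have eq1 : E / (p / (p - 1)) = E - E * p^-1 by field; rewrite pn0 p1n0.
  rewrite eq1 in Yg'.
  have ip : p * p^-1 = 1 by rewrite mulfV.
  set ipv := p^-1 in ip Yg' *.
  nra.
have Sge0 : 0 <= G + p^-1 * L `^ p * a `^ p.
  apply: addr_ge0; first exact: mulr_ge0 (gamge0 _ _) (rhoge0 _).
  by apply: mulr_ge0; [apply: mulr_ge0; [rewrite invr_ge0 ltW|apply: powR_ge0]|apply: powR_ge0].
rewrite -{1}(_ : p * (q / p) = q); last by field.
rewrite powRrM -(powRM _ (ltW p0) Sge0).
have qp : 0 <= q / p by apply: divr_ge0; [apply: ltW; apply: lt_trans q1|apply: ltW].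
apply: (ge0_ler_powR qp) => //.
- by rewrite nnegrE; apply: mulr_ge0 => //; apply: ltW.
Qed.
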